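(* For the Grover walk on $\mathbb{T}_\kappa$ ($\kappa\ge3$) started from $\Psi_0=\sum_j\varphi_j|e,\epsilon_j\rangle$, let $W_t$ denote its position at time $t$, i.e. $P(W_t=g)=\sum_{\epsilon\in\Sigma}|\langle g,\epsilon|U^t\Psi_0\rangle|^2$. If $\varphi=\varphi^{U}$ let $X_t$ be the walk on $\mathbb{Z}_+$ with wall defined below with $\gamma=0$, and if $\varphi=\varphi^{WU}$ let $X_t$ be that walk with $\gamma=\pi$. Then for all $t\ge0$ and all $x\in\mathbb{Z}_+$, $P(|W_t|=x)=P(X_t=x)$.
   Context: Fix $\kappa\ge3$. Let $\Sigma=\{\epsilon_0,\dots,\epsilon_{\kappa-1}\}$, $G$ the group generated by $\Sigma$ with relations $\epsilon_i^2=e$; the Cayley tree $\mathbb{T}_\kappa$ has vertices the reduced words in $G$ (root $e$), with $g\sim h$ iff $gh^{-1}\in\Sigma$; $|g|$ is the word length. The Grover walk acts on the Hilbert space with orthonormal basis $\{|g,\epsilon\rangle\}$ by $U|g,\epsilon\rangle=\sum_{\tau\in\Sigma}(-\delta_{\epsilon\tau}+2/\kappa)|\tau g,\tau\rangle$. Initial coin states: $\varphi^{U}$ with $\varphi_j=1/\sqrt\kappa$; $\varphi^{WU}$ with $\varphi_j=\omega_\kappa^{\,j}/\sqrt\kappa$, $\omega_\kappa=e^{2\pi i/\kappa}$. Walk with wall on $\mathbb{Z}_+=\{0,1,2,\dots\}$: let $a_\kappa=2\sqrt{\kappa-1}/\kappa$, $b_\kappa=1-2/\kappa$, $\gamma\in\mathbb{R}$.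 Consider the Hilbert space with orthonormal basis $\{|0,L\rangle\}\cup\{|x,L\rangle,|x,R\rangle: x\ge1\}$ and the unitary $\widetilde U$ given by $\widetilde U|0,L\rangle=e^{i\gamma}|1,R\rangle$ and, for $x\ge1$, $\widetilde U|x,L\rangle=a_\kappa|x-1,L\rangle+b_\kappa|x+1,R\rangle$, $\widetilde U|x,R\rangle=-b_\kappa|x-1,L\rangle+a_\kappa|x+1,R\rangle$. (Equivalently: coin $H_\kappa=\begin{bmatrix}a_\kappa&-b_\kappa\\ b_\kappa&a_\kappa\end{bmatrix}$ in the ordered basis $(|L\rangle,|R\rangle)$ at $x\ge1$, coin $e^{i\gamma}\begin{bmatrix}0&1\\1&0\end{bmatrix}$ at $x=0$, followed by the shift $|x,R\rangle\mapsto|x+1,R\rangle$, $|x,L\rangle\mapsto|x-1,L\rangle$.) With $\Phi_t=\widetilde U^t|0,L\rangle$, the random variable $X_t$ on $\mathbb{Z}_+$ has $P(X_t=0)=|\langle 0,L|\Phi_t\rangle|^2$ and $P(X_t=x)=|\langle x,L|\Phi_t\rangle|^2+|\langle x,R|\Phi_t\rangle|^2$ for $x\ge1$. *)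

(* Defs.v *)
(* all amplitudes are algebraic numbers, so we work in algC. *)
From HB Require Import structures.
From mathcomp Require Import all_boot all_order all_algebra all_field.
Set Implicit Arguments. Unset Strict Implicit. Unset Printing Implicit Defensive.
Import Order.TTheory GRing.Theory Num.Theory.
Local Open Scope ring_scope.

(* A group element is a word in the generators eps_0..eps_{k-1}, written
   left-to-right as a sequence of indices; it is reduced when no two
   consecutive letters coincide.  The root e is the empty word. *)
Definition reduced (k : nat) (s : seq 'I_k) : bool :=
  sorted (fun a b : 'I_k => a != b) s.

Definition gmul (k : nat) (tau : 'I_k) (g : seq 'I_k) : seq 'I_k :=
  if g is a :: g' then (if a == tau then g' else tau :: g) else [:: tau].

(* A state is the coefficient function (g, eps) |-> <g,eps|Psi>. *)
Definition tree_state (k : nat) := seq 'I_k -> 'I_k -> algC.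

(* Grover walk: U|g,eps> = sum_tau (-delta_{eps tau} + 2/k) |tau g, tau>,
   hence <h,tau|U Psi> = sum_eps (-delta_{eps tau} + 2/k) <tau h, eps|Psi>. *)
Definition grover_step (k : nat) (psi : tree_state k) : tree_state k :=
  fun h tau => \sum_(e < k) ((2 / k%:R) - (e == tau)%:R) * psi (gmul tau h) e.

Definition tree_init (k : nat) (phi : 'I_k -> algC) : tree_state k :=
  fun g e => if g is [::] then phi e else 0.

Definition tree_state_at (k : nat) (phi : 'I_k -> algC) (t : nat) : tree_state k :=
  iter t (@grover_step k) (tree_init phi).

Definition tree_dist_prob (k : nat) (phi : 'I_k -> algC) (t x : nat) : algC :=
  \sum_(w : x.-tuple 'I_k | reduced w)
     \sum_(e < k) `|tree_state_at phi t w e| ^+ 2.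

Definition phiU (k : nat) : 'I_k -> algC := fun _ => (sqrtC k%:R)^-1.
(* omega_k = e^{2 pi i/k} = (e^{i pi/k})^2, and k.-root (-1) is e^{i pi/k}
   (the k-th root of -1 of minimal nonnegative argument). *)
Definition omega (k : nat) : algC := (k.-root (-1)) ^+ 2.
Definition phiWU (k : nat) : 'I_k -> algC :=
  fun j => omega k ^+ (nat_of_ord j) / sqrtC k%:R.

Definition a_k (k : nat) : algC := 2%:R * sqrtC (k.-1)%:R / k%:R.
Definition b_k (k : nat) : algC := 1 - 2%:R / k%:R.

(* state: x |-> (<x,L|Phi>, <x,R|Phi>); the (0,R) component is not part of
   the Hilbert space and is kept equal to 0. [c] is the phase e^{i gamma}. *)
Definition line_state := nat -> algC * algC.

Definition line_step (k : nat) (c : algC) (psi : line_state) : line_state :=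
  fun y =>
    ( a_k k * (psi y.+1).1 - b_k k * (psi y.+1).2,
      match y with
      | 0 => 0
      | 1 => c * (psi 0%N).1
      | y'.+1 => b_k k * (psi y').1 + a_k k * (psi y').2
      end ).

Definition line_init : line_state := fun x => if x is 0 then (1, 0) else (0, 0).

Definition line_state_at (k : nat) (c : algC) (t : nat) : line_state :=
  iter t (line_step k c) line_init.

Definition line_prob (k : nat) (c : algC) (t x : nat) : algC :=
  if x is 0 then `|(line_state_at k c t 0%N).1| ^+ 2
  else `|(line_state_at k c t x).1| ^+ 2 + `|(line_state_at k c t x).2| ^+ 2.

(* Main.v *)
Require Import Defs.
From HB Require Import structures.
From mathcomp Require Import all_boot all_order all_algebra all_field.
From Stdlib Require Import Ring Field.
Import Order.TTheory GRing.Theory Num.Theory.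
Local Open Scope ring_scope.

Definition addC (x y : algC) : algC := x + y.
Definition mulC (x y : algC) : algC := x * y.
Definition oppC (x : algC) : algC := - x.
Definition subC (x y : algC) : algC := x - y.
Definition invC (x : algC) : algC := x^-1.
Definition divC (x y : algC) : algC := x / y.
Definition zeroC : algC := 0.
Definition oneC : algC := 1.

Lemma algC_field : @field_theory algC zeroC oneC addC mulC subC oppC divC invC eq.
Proof.
split.
- split; rewrite /addC/mulC/subC/oppC/zeroC/oneC.
  exact: add0r. exact: addrC. exact: addrA. exact: mul1r. exact: mulrC. exact: mulrA. exact: mulrDl. by []. exact: subrr.
- by move/eqP; rewrite oner_eq0.
- by [].
- by rewrite /invC/mulC/oneC => p /eqP; exact: mulVf.
Qed.
Add Field algCfield : algC_field.

Ltac wrapC t :=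
  lazymatch t with
  | ?a + ?b => let a' := wrapC a in let b' := wrapC b in constr:(addC a' b')
  | ?a - ?b => let a' := wrapC a in let b' := wrapC b in constr:(subC a' b')
  | ?a / ?b => let a' := wrapC a in let b' := wrapC b in constr:(divC a' b')
  | ?a * ?b => let a' := wrapC a in let b' := wrapC b in constr:(mulC a' b')
  | - ?a => let a' := wrapC a in constr:(oppC a')
  | ?a ^-1 => let a' := wrapC a in constr:(invC a')
  | 0 => constr:(zeroC)
  | 1 => constr:(oneC)
  | _ => t
  end.
Ltac fieldC :=
  match goal with |- ?l = ?r =>
    let l' := wrapC l in let r' := wrapC r in change (l' = r') end;
  field.


Definition ans (k : nat) (chi : 'I_k -> algC) (ls : line_state) (g : seq 'I_k) (e : 'I_k) : algC :=
  match g with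
  | [::] => chi e * (ls 0%N).1 / sqrtC k%:R
  | g1 :: g' => chi (last g1 g') *
      (if e == g1 then (ls (size g').+1).2 / (sqrtC k%:R * sqrtC (k.-1)%:R ^+ size g')
       else (ls (size g').+1).1 / (sqrtC k%:R * sqrtC (k.-1)%:R ^+ (size g').+1))
  end.

Arguments ans {k}.

Lemma sum_split k (a : algC) (tau : 'I_k) (f : 'I_k -> algC) :
  \sum_(e < k) (a - (e == tau)%:R) * f e = a * \sum_(e < k) f e - f tau.
Proof.
rewrite (eq_bigr (fun e => a * f e - (e == tau)%:R * f e)) => [|e _]; last by rewrite mulrBl.
rewrite sumrB -mulr_sumr; congr (_ - _); rewrite (bigD1 tau) //= eqxx mul1r big1 ?addr0 // => e /negbTE ->.
by rewrite mul0r.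
Qed.

Lemma sum_ans_cons k chi ls (g1 : 'I_k) g' :
  \sum_(e < k) ans chi ls (g1 :: g') e =
  chi (last g1 g') * ((ls (size g').+1).2 / (sqrtC k%:R * sqrtC (k.-1)%:R ^+ size g')
     + (k.-1)%:R * ((ls (size g').+1).1 / (sqrtC k%:R * sqrtC (k.-1)%:R ^+ (size g').+1))).
Proof.
rewrite /= -mulr_sumr (bigD1 g1) //= eqxx; congr (_ * (_ + _)).
rewrite (eq_bigr (fun _ => (ls (size g').+1).1 / (sqrtC k%:R * sqrtC (k.-1)%:R ^+ (size g').+1))) => [|e /negbTE -> //].
by rewrite sumr_const cardC1 card_ord mulr_natl.
Qed.

Lemma sum_ans_nil k chi ls sig : \sum_(e < k) chi e = sig ->
  \sum_(e < k) ans chi ls [::] e = sig * (ls 0%N).1 / sqrtC k%:R.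
Proof. by move=> <-; rewrite /= -!mulr_suml. Qed.

Lemma reduced_gmul k (tau : 'I_k) h : reduced h -> reduced (gmul tau h).
Proof.
case: h => [|a h] //=; case: (eqVneq a tau) => [->|ne] /=.
  by move/path_sorted.
by rewrite /reduced /= eq_sym ne.
Qed.
Ltac sideC := repeat split; apply/eqP; first [assumption | apply: expf_neq0; assumption].
Ltac finC hs hK1 hK hr := rewrite ?/a_k ?/b_k;
  let s := fresh "s" in let r := fresh "r" in
  set s := sqrtC (_.-1)%:R in hs hK1 hK *;
  set r := sqrtC (_)%:R in hr *;
  rewrite ?hK1 ?hK ?exprS ?expr0 -?[2%:R]/(1+1);
  fieldC; sideC.

Lemma step_ok k chi sig c ls (h : seq 'I_k) (tau : 'I_k) (hk : (2 <= k)%N)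
  (Hsum : \sum_(e < k) chi e = sig) (Hc : forall e, 2%:R / k%:R * sig - chi e = chi e * c) :
  reduced h ->
  2%:R / k%:R * (\sum_(e < k) ans chi ls (gmul tau h) e) - ans chi ls (gmul tau h) tau
  = ans chi (line_step k c ls) h tau.
Proof.
have k0 : (0 < k)%N by apply: leq_trans hk.
have hr : sqrtC k%:R != 0 :> algC by rewrite sqrtC_eq0 pnatr_eq0 -lt0n.
have hs : sqrtC (k.-1)%:R != 0 :> algC by rewrite sqrtC_eq0 pnatr_eq0 -lt0n -ltnS prednK.
have hK1 : (k.-1)%:R = sqrtC (k.-1)%:R * sqrtC (k.-1)%:R :> algC by rewrite -expr2 sqrtCK.
have hK : k%:R = sqrtC (k.-1)%:R * sqrtC (k.-1)%:R + 1 :> algC by rewrite -hK1 natr1 prednK.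
have hk' : sqrtC (k.-1)%:R * sqrtC (k.-1)%:R + 1 != 0 :> algC by rewrite -hK pnatr_eq0 -lt0n.
case: h => [|h1 h'] Hred.
- rewrite [gmul _ _]/= sum_ans_cons /= eqxx.
  finC hs hK1 hK hr.
- case: (eqVneq h1 tau) => [<-|ne].
  + rewrite [gmul _ _]/= eqxx.
    case: h' Hred => [|h2 h''] Hred.
    * rewrite (@sum_ans_nil _ _ _ _ Hsum) /= eqxx expr0 mulr1 !mulrA -(Hc h1).
      finC hs hK1 hK hr.
    * move: (Hred); rewrite /reduced /= => /andP[ne12 _].
      rewrite sum_ans_cons /= (negbTE ne12) eqxx.
      finC hs hK1 hK hr.
  + rewrite [gmul _ _]/= (negbTE ne) sum_ans_cons /= eqxx eq_sym (negbTE ne).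
    finC hs hK1 hK hr.
Qed.
Lemma tree_ans k (hk : (2 <= k)%N) (phi chi : 'I_k -> algC) sig c
  (Hinit : forall e, phi e = chi e / sqrtC k%:R)
  (Hsum : \sum_(e < k) chi e = sig) (Hc : forall e, 2%:R / k%:R * sig - chi e = chi e * c) :
  forall t g, reduced g -> forall e,
  tree_state_at phi t g e = ans chi (line_state_at k c t) g e.
Proof.
elim=> [|t IH] g Hg e.
- case: g Hg => [|g1 g'] _ /=.
    by rewrite Hinit /line_init /= mulr1.
  by rewrite /line_init /= !mul0r if_same mulr0.
- change (tree_state_at phi t.+1 g e) with (grover_step (tree_state_at phi t) g e).
  rewrite /grover_step (eq_bigr (fun e' => (2%:R / k%:R - (e' == e)%:R) * ans chi (line_state_at k c t) (gmul e g) e')) => [|e' _]; last by rewrite IH // reduced_gmul.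
  rewrite sum_split.
  change (line_state_at k c t.+1) with (line_step k c (line_state_at k c t)).
  exact: (@step_ok k chi sig c _ g e hk Hsum Hc Hg).
Qed.

Lemma norm_ans_nil k (k0 : (0 < k)%N) (chi : 'I_k -> algC) ls
  (Hnorm : forall e, `|chi e| = 1) :
  \sum_(e < k) `|ans chi ls [::] e| ^+ 2 = `|(ls 0%N).1| ^+ 2.
Proof.
have hr : sqrtC k%:R != 0 :> algC by rewrite sqrtC_eq0 pnatr_eq0 -lt0n.
rewrite /= (eq_bigr (fun _ => `|(ls 0%N).1| ^+ 2 / k%:R)) => [|e _].
  by rewrite sumr_const card_ord -[_ *+ k]mulr_natr mulfVK // pnatr_eq0 -lt0n.
rewrite !normrM normfV Hnorm mul1r [`|sqrtC _|]ger0_norm ?sqrtC_ge0 ?ler0n //.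
by rewrite exprMn exprVn sqrtCK.
Qed.

Lemma norm_ans_cons k (hk : (2 <= k)%N) (chi : 'I_k -> algC) ls g1 g'
  (Hnorm : forall e, `|chi e| = 1) :
  \sum_(e < k) `|ans chi ls (g1 :: g') e| ^+ 2 =
  (`|(ls (size g').+1).1| ^+ 2 + `|(ls (size g').+1).2| ^+ 2) / (k%:R * (k.-1)%:R ^+ size g').
Proof.
have k0 : (0 < k)%N by apply: leq_trans hk.
have hr : sqrtC k%:R != 0 :> algC by rewrite sqrtC_eq0 pnatr_eq0 -lt0n.
have hs : sqrtC (k.-1)%:R != 0 :> algC by rewrite sqrtC_eq0 pnatr_eq0 -lt0n -ltnS prednK.
have hK1 : (k.-1)%:R = sqrtC (k.-1)%:R * sqrtC (k.-1)%:R :> algC by rewrite -expr2 sqrtCK.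
have hK : k%:R = sqrtC (k.-1)%:R * sqrtC (k.-1)%:R + 1 :> algC by rewrite -hK1 natr1 prednK.
have hk' : sqrtC (k.-1)%:R * sqrtC (k.-1)%:R + 1 != 0 :> algC by rewrite -hK pnatr_eq0 -lt0n.
rewrite (bigD1 g1) //= eqxx.
rewrite (eq_bigr (fun _ => `|chi (last g1 g') * ((ls (size g').+1).1 / (sqrtC k%:R * sqrtC (k.-1)%:R ^+ (size g').+1))| ^+ 2)) => [|e /negbTE -> //].
rewrite sumr_const cardC1 card_ord -[(_ ^+ 2) *+ _]mulr_natl.
rewrite !normrM !normfV !normrM !normrX Hnorm !mul1r.
rewrite ![`|sqrtC _|]ger0_norm ?sqrtC_ge0 ?ler0n // !expr_div_n !exprMn !sqrtCK !expr2.
rewrite ?/a_k ?/b_k.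
  set s := sqrtC (_.-1)%:R in hs hK1 hK *.
  set r := sqrtC (_)%:R in hr *.
  rewrite ?hK1 ?hK ?exprS ?expr0 -?[2%:R]/(1+1).
  rewrite exprMn.
set S := s ^+ size g'. fieldC; sideC.
Qed.
Lemma big_tuple_cons (T : finType) n (F : n.+1.-tuple T -> nat) :
  (\sum_(w : n.+1.-tuple T) F w = \sum_(a : T) \sum_(w : n.-tuple T) F [tuple of a :: w])%N.
Proof.
rewrite pair_big /= (reindex (fun p : T * n.-tuple T => [tuple of p.1 :: p.2])) //.
exists (fun w : n.+1.-tuple T => (thead w, [tuple of behead w])) => [[a w] _ | w _] /=.
- by rewrite theadE; congr pair; apply: val_inj.
- by rewrite -tuple_eta.
Qed.

Lemma cnt_red k n (a : 'I_k) :
  (\sum_(w : n.-tuple 'I_k) (reduced (a :: w) : nat) = k.-1 ^ n)%N.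
Proof.
elim: n a => [|n IH] a.
  rewrite (eq_bigr (fun _ => 1%N)) => [|w _]; last by rewrite tuple0.
  by rewrite sum_nat_const card_tuple.
rewrite big_tuple_cons.
rewrite (eq_bigr (fun b => (a != b) * k.-1 ^ n)%N) => [|b _].
  rewrite -big_distrl /= -big_mkcond /= sum1_card.
  rewrite (eq_card (B := predC1 a)) ?cardC1 ?card_ord ?expnS //.
  by move=> b; rewrite !inE eq_sym.
rewrite -(IH b) big_distrr /=; apply: eq_bigr => w _.
by rewrite mulnb.
Qed.

Lemma cnt_tuple k n :
  (\sum_(w : n.+1.-tuple 'I_k) (reduced w : nat) = k * k.-1 ^ n)%N.
Proof.
rewrite big_tuple_cons (eq_bigr (fun _ => k.-1 ^ n)%N) => [|a _]; last exact: cnt_red.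
by rewrite sum_nat_const card_ord.
Qed.

Lemma cnt_tuple0 k :
  (\sum_(w : 0.-tuple 'I_k) (reduced w : nat) = 1)%N.
Proof.
rewrite (eq_bigr (fun _ => 1%N)) => [|w _]; last by rewrite tuple0.
by rewrite sum_nat_const card_tuple.
Qed.

Lemma sum_red_const k x (C : algC) :
  \sum_(w : x.-tuple 'I_k | reduced w) C = C * (\sum_(w : x.-tuple 'I_k) (reduced w : nat))%:R.
Proof.
rewrite natr_sum mulr_sumr big_mkcond /=; apply: eq_bigr => w _.
by case: (reduced w); rewrite ?mulr1 ?mulr0.
Qed.

Lemma general k (hk : (2 <= k)%N) (phi chi : 'I_k -> algC) sig c
  (Hinit : forall e, phi e = chi e / sqrtC k%:R)
  (Hsum : \sum_(e < k) chi e = sig) (Hc : forall e, 2%:R / k%:R * sig - chi e = chi e * c)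
  (Hnorm : forall e, `|chi e| = 1) :
  forall t x, tree_dist_prob phi t x = line_prob k c t x.
Proof.
have k0 : (0 < k)%N by apply: leq_trans hk.
move=> t x; rewrite /tree_dist_prob.
rewrite (eq_bigr (fun w : x.-tuple 'I_k => \sum_(e < k) `|ans chi (line_state_at k c t) w e| ^+ 2)) => [|w Hw]; last first.
  by apply: eq_bigr => e _; rewrite (@tree_ans k hk phi chi sig c Hinit Hsum Hc).
case: x => [|n].
- rewrite (eq_bigr (fun _ => `|(line_state_at k c t 0%N).1| ^+ 2)) => [|w _]; last first.
    by rewrite (tuple0 w) /= norm_ans_nil.
  by rewrite sum_red_const cnt_tuple0 mulr1.
- rewrite (eq_bigr (fun _ => (`|(line_state_at k c t n.+1).1| ^+ 2 + `|(line_state_at k c t n.+1).2| ^+ 2) / (k%:R * (k.-1)%:R ^+ n))) => [|w _]; last first.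
    case: w => [[|g1 g'] // Hsz].
    have Hs : size g' = n by apply/eqP; exact: Hsz.
    have := @norm_ans_cons k hk chi (line_state_at k c t) g1 g' Hnorm.
    by rewrite Hs.
  rewrite sum_red_const cnt_tuple natrM natrX mulfVK //.
  by rewrite mulf_neq0 ?expf_neq0 // pnatr_eq0 -lt0n // -ltnS prednK.
Qed.

Lemma omega_facts k (hk : (2 <= k)%N) :
  `|omega k| = 1 /\ \sum_(j < k) omega k ^+ j = 0.
Proof.
have k0 : (0 < k)%N by apply: leq_trans hk.
set z := k.-root (-1 : algC).
have nz : `|z| = 1 by rewrite /z norm_rootC normrN1 rootC1.
split; first by rewrite /omega normrX nz expr1n.
have hzk : z ^+ k = -1 by rewrite /z rootCK.
have w1 : omega k ^+ k = 1 by rewrite /omega -/z exprAC hzk sqrrN expr1n.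
have wn1 : omega k - 1 != 0.
  rewrite /omega -/z -[1](expr1n _ 2) subr_sqr mulf_eq0 negb_or !subr_eq0.
  apply/andP; split.
    by apply/eqP => ez; move: hzk; rewrite ez expr1n => /eqP; rewrite -addr_eq0 -mulr2n pnatr_eq0.
  rewrite addr_eq0; apply/eqP => ez.
  have H : (z < 0) = false by exact: rootC_lt0.
  by move: H; rewrite ez oppr_lt0 ltr01.
have := subrX1 (omega k) k; rewrite w1 subrr => /esym /eqP.
by rewrite mulf_eq0 (negbTE wn1) /= => /eqP.
Qed.

Theorem mainTheorem2 (k : nat) (hk : (3 <= k)%N) :
  forall t x : nat,
    tree_dist_prob (@phiU k) t x = line_prob k 1 t x /\
    tree_dist_prob (@phiWU k) t x = line_prob k (-1) t x.
Proof.
have hk2 : (2 <= k)%N by apply: ltnW.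
have k0 : (0 < k)%N by apply: leq_trans hk2.
have kn0 : k%:R != 0 :> algC by rewrite pnatr_eq0 -lt0n.
move=> t x; split.
- apply: (@general k hk2 _ (fun _ => 1) k%:R 1) => [e|||e].
  + by rewrite /phiU div1r.
  + by rewrite sumr_const card_ord.
  + by move=> e; rewrite mulfVK // mulr1 mulr2n addrK.
  + by rewrite normr1.
- have [nw sw] := @omega_facts k hk2.
  apply: (@general k hk2 _ (fun j => omega k ^+ j) 0 (-1)) => [e|||e].
  + by [].
  + exact: sw.
  + by move=> e; rewrite mulr0 sub0r mulrN1.
  + by rewrite normrX nw expr1n.
Qed.
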